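(* Let $\alpha>1$ and let $u_0:[0,\infty)\to[0,\infty)$ be bounded and integrable with $u_0^{\alpha-1}$ Lipschitz continuous; let $m_0(\rho)=\int_0^\rho u_0$ and $P_t(\rho_0)=\rho_0+\alpha\, m_0(\rho_0)\,u_0(\rho_0)^{\alpha-1}\,t$. Then there exists $T>0$ such that for every $t\in[0,T]$ the map $P_t$ is a bi-Lipschitz bijection of $[0,\infty)$, and the function $$u(t,\rho)=\begin{cases}\big(u_0(P_t^{-1}(\rho))^{-\alpha}+\alpha t\big)^{-1/\alpha}, & u_0(P_t^{-1}(\rho))\neq 0,\\ 0,& u_0(P_t^{-1}(\rho))=0,\end{cases}$$ is continuous, so that $m(t,\rho)=\int_0^\rho u(t,\sigma)\,d\sigma$ is a classical ($C^1$) solution of $m_t+m(m_\rho)^\alpha=0$ on $(0,T]\times(0,\infty)$ with $m(0,\cdot)=m_0$, $m(t,0)=0$. (One may take any $T<1/(\alpha L)$ with $L=\sup_{\rho_0\ge0}\big|u_0^\alpha+m_0\,\frac{d}{d\rho_0}(u_0^{\alpha-1})\big|$.)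
   Context: Radially symmetric densities are written as functions of a volume variable $\rho\ge0$, and the mass function is $m(t,\rho)=\int_0^\rho u(t,\sigma)\,d\sigma$, so $u=m_\rho$. The mass equation is $m_t+m(m_\rho)^\alpha=0$. A classical solution is a $C^1$ function satisfying this equation pointwise; ''given by characteristics'' refers to the explicit formula above. *)

(* Defs.v *)
From Stdlib Require Import Reals.
From Coquelicot Require Import Coquelicot.
Open Scope R_scope.

(* Real power for a nonnegative base: x^a for x > 0, and 0 for x <= 0
   (the correct value of 0^a for a > 0; used only at positive bases
   when a <= 0). *)
Definition rpow (x a : R) : R := if Rlt_dec 0 x then Rpower x a else 0.

Definition cont2_on (D : R -> R -> Prop) (f : R -> R -> R) : Prop :=
  forall t x, D t x ->
    filterlim (fun p : R * R => f (fst p) (snd p))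
      (within (fun p : R * R => D (fst p) (snd p)) (locally (t, x)))
      (locally (f t x)).

Definition is_derive_within (I : R -> Prop) (g : R -> R) (t l : R) : Prop :=
  filterlim (fun s => (g s - g t) / (s - t))
    (within (fun s => I s /\ s <> t) (locally t)) (locally l).

(* m is a classical (C^1) solution of m_t + m (m_rho)^alpha = 0 on
   (0,T] x (0,oo): the partial derivatives exist there (the time derivative
   is one-sided at t = T), are jointly continuous on that set together with
   m, and satisfy the equation pointwise. *)
Definition classical_solution (alpha T : R) (m : R -> R -> R) : Prop :=
  let D := fun t rho => 0 < t <= T /\ 0 < rho in
  exists mt mr : R -> R -> R,
    cont2_on D m /\ cont2_on D mt /\ cont2_on D mr /\
    (forall t rho, D t rho ->
       is_derive_within (fun s => 0 < s <= T) (fun s => m s rho) t (mt t rho) /\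
       is_derive (fun r => m t r) rho (mr t rho) /\
       mt t rho + m t rho * rpow (mr t rho) alpha = 0).

(* Main.v *)
Require Import Defs.
From Stdlib Require Import Reals Lra Psatz.
From Coquelicot Require Import Coquelicot.
Open Scope R_scope.

Lemma rpow_pos x a : 0 < x -> rpow x a = Rpower x a.
Proof. intros H; unfold rpow; destruct (Rlt_dec 0 x); [reflexivity|lra]. Qed.

Lemma rpow_nonpos x a : x <= 0 -> rpow x a = 0.
Proof. intros H; unfold rpow; destruct (Rlt_dec 0 x); [lra|reflexivity]. Qed.

Lemma Rpower_gt0 x a : 0 < Rpower x a.
Proof. unfold Rpower; apply exp_pos. Qed.

Lemma rpow_ge0 x a : 0 <= rpow x a.
Proof. unfold rpow; destruct (Rlt_dec 0 x); [left; apply Rpower_gt0|lra]. Qed.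

Lemma rpow_gt0 x a : 0 < x -> 0 < rpow x a.
Proof. intros H; rewrite rpow_pos; auto; apply Rpower_gt0. Qed.

Lemma rpow_mult x b c : rpow (rpow x b) c = rpow x (b * c).
Proof.
  destruct (Rlt_dec 0 x) as [H|H].
  - rewrite (rpow_pos x b) by auto. rewrite rpow_pos by apply Rpower_gt0.
    rewrite Rpower_mult, rpow_pos; auto.
  - rewrite (rpow_nonpos x) by lra. rewrite rpow_nonpos by lra.
    rewrite rpow_nonpos; lra.
Qed.

Lemma rpow_plus x b c : rpow x b * rpow x c = rpow x (b + c).
Proof.
  destruct (Rlt_dec 0 x) as [H|H].
  - rewrite !rpow_pos by auto. rewrite Rpower_plus; auto.
  - rewrite !rpow_nonpos by lra. ring.
Qed.

Lemma rpow_1 x : 0 <= x -> rpow x 1 = x.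
Proof.
  intros H; destruct (Rlt_dec 0 x) as [H'|H'].
  - rewrite rpow_pos by auto; apply Rpower_1; auto.
  - rewrite rpow_nonpos; lra.
Qed.

Lemma rpow_0 x : 0 < x -> rpow x 0 = 1.
Proof. intros H; rewrite rpow_pos by auto; apply Rpower_O; auto. Qed.

Lemma rpow_zero a : rpow 0 a = 0.
Proof. apply rpow_nonpos; lra. Qed.

Lemma rpow_lt x y c : 0 < c -> 0 < x < y -> rpow x c < rpow y c.
Proof. intros Hc Hxy; rewrite !rpow_pos by lra; apply Rlt_Rpower_l; auto. Qed.

Lemma rpow_le x y c : 0 <= c -> x <= y -> rpow x c <= rpow y c.
Proof.
  intros Hc Hxy. destruct (Rlt_dec 0 x) as [H|H].
  - rewrite !rpow_pos by lra; apply Rle_Rpower_l; lra.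
  - rewrite (rpow_nonpos x) by lra; apply rpow_ge0.
Qed.

Lemma rpow_small c : 0 < c -> forall eps, 0 < eps ->
  exists d, 0 < d /\ forall x, Rabs x < d -> rpow x c < eps.
Proof.
  intros Hc eps He. exists (Rpower eps (/ c)). split. apply Rpower_gt0.
  intros x Hx. destruct (Rlt_dec 0 x) as [H|H].
  - apply Rlt_le_trans with (rpow (Rpower eps (/c)) c).
    apply rpow_lt; auto. split; auto. rewrite Rabs_right in Hx; lra.
    rewrite rpow_pos by apply Rpower_gt0. rewrite Rpower_mult.
    rewrite Rinv_l by lra. rewrite Rpower_1; lra.
  - rewrite rpow_nonpos; lra.
Qed.

Lemma rpow_cont c : 0 < c -> forall y, continuous (fun x => rpow x c) y.
Proof.
  intros Hc y. destruct (Rtotal_order y 0) as [Hy|[Hy|Hy]].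
  - apply continuous_ext_loc with (fun _ => 0).
    exists (mkposreal (-y) ltac:(lra)). intros z Hz.
    unfold ball in Hz; simpl in Hz; unfold AbsRing_ball, abs, minus, plus, opp in Hz; simpl in Hz.
    rewrite rpow_nonpos; auto. apply Rabs_def2 in Hz. lra.
    apply continuous_const.
  - subst. apply filterlim_locally. intros eps.
    destruct (rpow_small c Hc eps (cond_pos eps)) as [d [Hd H]].
    exists (mkposreal d Hd). intros z Hz.
    unfold ball in Hz; simpl in Hz; unfold AbsRing_ball, abs, minus, plus, opp in Hz; simpl in Hz.
    unfold ball; simpl; unfold AbsRing_ball, abs, minus, plus, opp; simpl.
    rewrite rpow_zero. replace (rpow z c + - 0) with (rpow z c) by ring.
    rewrite Rabs_right. apply H. change (Rabs (z + - 0) < d) in Hz. rewrite Ropp_0, Rplus_0_r in Hz. auto.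
    apply Rle_ge, rpow_ge0.
  - apply continuous_ext_loc with (fun x => Rpower x c).
    exists (mkposreal y Hy). intros z Hz.
    unfold ball in Hz; simpl in Hz; unfold AbsRing_ball, abs, minus, plus, opp in Hz; simpl in Hz.
    apply Rabs_def2 in Hz. rewrite rpow_pos; auto; lra.
    apply (@ex_derive_continuous R_AbsRing R_NormedModule). exists (c * Rpower y (c - 1)).
    apply is_derive_Reals. apply derivable_pt_lim_power; auto.
Qed.

Lemma Rpower_derive y c : 0 < y -> is_derive (fun x => Rpower x c) y (c * Rpower y (c - 1)).
Proof. intros; apply is_derive_Reals, derivable_pt_lim_power; auto. Qed.

Lemma rpow_derive c : 1 < c -> forall y, is_derive (fun x => rpow x c) y (c * rpow y (c - 1)).
Proof.
  intros Hc y. destruct (Rtotal_order y 0) as [Hy|[Hy|Hy]].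
  - rewrite rpow_nonpos by lra. rewrite Rmult_0_r.
    apply is_derive_ext_loc with (fun _ => 0).
    exists (mkposreal (-y) ltac:(lra)). intros z Hz.
    unfold ball in Hz; simpl in Hz; unfold AbsRing_ball, abs, minus, plus, opp in Hz; simpl in Hz.
    rewrite rpow_nonpos; auto. apply Rabs_def2 in Hz. lra.
    apply (@is_derive_const R_AbsRing R_NormedModule).
  - subst. rewrite rpow_zero, Rmult_0_r. apply is_derive_Reals.
    intros eps He. destruct (rpow_small (c-1) ltac:(lra) eps He) as [d [Hd H]].
    exists (mkposreal d Hd). intros h Hh0 Hh. simpl in Hh.
    rewrite Rplus_0_l, rpow_zero. destruct (Rlt_dec 0 h) as [Hp|Hp].
    + rewrite rpow_pos by auto.
      replace (Rpower h c) with (Rpower h (c - 1) * h).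
      replace ((Rpower h (c - 1) * h - 0) / h - 0) with (Rpower h (c-1)) by (field; auto).
      rewrite Rabs_right by (left; apply Rpower_gt0). rewrite <- rpow_pos; auto.
      rewrite <- (Rpower_1 h) at 2 by auto. rewrite <- Rpower_plus. f_equal; ring.
    + rewrite rpow_nonpos by lra. replace ((0-0)/h - 0) with 0 by (field; auto).
      rewrite Rabs_R0; auto.
  - apply is_derive_ext_loc with (fun x => Rpower x c).
    exists (mkposreal y Hy). intros z Hz.
    unfold ball in Hz; simpl in Hz; unfold AbsRing_ball, abs, minus, plus, opp in Hz; simpl in Hz.
    apply Rabs_def2 in Hz. rewrite rpow_pos; auto; lra.
    rewrite rpow_pos by auto. apply Rpower_derive; auto.
Qed.

Definition Af a G := rpow G (/ (a - 1)).
Definition Sf a G := rpow G (a / (a - 1)).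
Definition Bs a t G := 1 + a * t * Sf a G.
Definition Wf a t G := Rpower (Bs a t G) ((a - 1) / a).
Definition Uf a t G := Af a G * Rpower (Bs a t G) (- / a).
Definition Vt a t G := (a - 1) * Sf a G * Rpower (Bs a t G) (- / a).

Section SP2.
Variable a : R.
Hypothesis Ha : 1 < a.

Lemma Sf_ge0 G : 0 <= Sf a G. Proof. apply rpow_ge0. Qed.
Lemma Af_ge0 G : 0 <= Af a G. Proof. apply rpow_ge0. Qed.

Lemma Bs_ge1 t G : 0 <= t -> 1 <= Bs a t G.
Proof. intros; unfold Bs. assert (0 <= Sf a G) by apply Sf_ge0.
  assert (0 <= a * t * Sf a G) by (apply Rmult_le_pos; [apply Rmult_le_pos|]; lra). lra. Qed.

Lemma Rpower_1_base c : Rpower 1 c = 1.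
Proof. unfold Rpower; rewrite ln_1, Rmult_0_r, exp_0; auto. Qed.

Lemma Wf_0 G : Wf a 0 G = 1.
Proof. unfold Wf, Bs. rewrite Rmult_0_r, Rmult_0_l, Rplus_0_r. apply Rpower_1_base. Qed.

Lemma Uf_0 G : Uf a 0 G = Af a G.
Proof. unfold Uf, Bs. rewrite Rmult_0_r, Rmult_0_l, Rplus_0_r, Rpower_1_base; ring. Qed.

Lemma Uf_ge0 t G : 0 <= Uf a t G.
Proof. unfold Uf. apply Rmult_le_pos. apply Af_ge0. left; apply Rpower_gt0. Qed.

Lemma AfG G : 0 <= G -> Af a G * G = Sf a G.
Proof.
  intros HG. unfold Af, Sf. rewrite <- (rpow_1 G) at 2 by auto. rewrite rpow_plus.
  f_equal. field. lra.
Qed.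

Lemma Wf_split t G : 0 <= t -> Wf a t G = Bs a t G * Rpower (Bs a t G) (- / a).
Proof.
  intros Ht. unfold Wf. assert (1 <= Bs a t G) by (apply Bs_ge1; auto).
  rewrite <- (Rpower_1 (Bs a t G)) at 2 by lra. rewrite <- Rpower_plus. f_equal. field. lra.
Qed.

Lemma ident_rho t G : 0 <= t -> 0 <= G ->
  Af a G * (Wf a t G - a * t * Uf a t G * G) = Uf a t G.
Proof.
  intros Ht HG. rewrite Wf_split by auto. unfold Uf.
  replace (Af a G * (Bs a t G * Rpower (Bs a t G) (- / a) - a * t * (Af a G * Rpower (Bs a t G) (- / a)) * G))
   with (Af a G * Rpower (Bs a t G) (- / a) * (Bs a t G - a * t * (Af a G * G))) by ring.
  rewrite AfG by auto. unfold Bs. ring.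
Qed.

Lemma rpow_mul_distr x y c : 0 <= x -> 0 < y -> rpow (x * y) c = rpow x c * Rpower y c.
Proof.
  intros Hx Hy. destruct (Rlt_dec 0 x) as [H|H].
  - rewrite !rpow_pos by (try apply Rmult_lt_0_compat; auto). rewrite Rpower_mult_distr; auto.
  - assert (x = 0) by lra. subst. rewrite Rmult_0_l, !rpow_zero; ring.
Qed.

Lemma ident_t t G : 0 <= t -> 0 <= G ->
  Vt a t G - a * Uf a t G * G = - (Wf a t G * rpow (Uf a t G) a).
Proof.
  intros Ht HG. assert (HB: 1 <= Bs a t G) by (apply Bs_ge1; auto).
  unfold Uf. rewrite rpow_mul_distr by (first [apply Af_ge0 | apply Rpower_gt0]).
  unfold Af at 2. rewrite rpow_mult.
  replace (/ (a - 1) * a) with (a / (a-1)) by (field; lra). fold (Sf a G).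
  rewrite Rpower_mult. replace (- / a * a) with (- (1)) by (field; lra).
  rewrite (Rpower_Ropp _ 1). rewrite (Rpower_1 (Bs a t G)) by lra.
  rewrite Wf_split by auto. unfold Vt.
  replace ((a - 1) * Sf a G * Rpower (Bs a t G) (- / a) - a * (Af a G * Rpower (Bs a t G) (- / a)) * G)
   with ((a - 1) * Sf a G * Rpower (Bs a t G) (- / a) - a * Rpower (Bs a t G) (- / a) * (Af a G * G)) by ring.
  rewrite AfG by auto. field. lra.
Qed.

Lemma u_formula t A : 0 <= t -> 0 < A ->
  rpow (rpow A (- a) + a * t) (- / a) = Uf a t (rpow A (a - 1)).
Proof.
  intros Ht HA. unfold Uf, Af, Bs, Sf. rewrite !rpow_mult.
  replace ((a-1) * / (a-1)) with 1 by (field; lra).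
  replace ((a-1) * (a / (a-1))) with a by (field; lra).
  rewrite rpow_1 by lra.
  assert (H1 : rpow A (- a) * rpow A a = 1). { rewrite rpow_plus. replace (-a + a) with 0 by ring. apply rpow_0; auto. }
  assert (Hp : 0 < rpow A (-a)) by (apply rpow_gt0; auto).
  assert (Hq : 0 <= rpow A a) by apply rpow_ge0.
  replace (rpow A (- a) + a * t) with (rpow A (- a) * (1 + a * t * rpow A a)).
  2:{ replace (rpow A (- a) * (1 + a * t * rpow A a)) with (rpow A (- a) + a * t * (rpow A (- a) * rpow A a)) by ring.
      rewrite H1; ring. }
  rewrite rpow_mul_distr by (try lra; assert (0 <= a * t * rpow A a) by (apply Rmult_le_pos; [apply Rmult_le_pos|]; lra); lra).
  rewrite rpow_mult. replace (- a * - / a) with 1 by (field; lra). rewrite rpow_1; lra.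
Qed.

Lemma Af_of A : 0 <= A -> Af a (rpow A (a - 1)) = A.
Proof. intros HA. unfold Af. rewrite rpow_mult. replace ((a-1) * / (a-1)) with 1 by (field; lra). apply rpow_1; auto. Qed.

Lemma Sf_derive G : is_derive (Sf a) G (a / (a - 1) * Af a G).
Proof.
  unfold Sf, Af. replace (/ (a - 1)) with (a / (a - 1) - 1) by (field; lra).
  apply rpow_derive. apply Rlt_le_trans with (1 + 1/(a-1)). assert (0 < 1/(a-1)) by (apply Rdiv_lt_0_compat; lra). lra.
  right; field; lra.
Qed.

Lemma Wf_derive_G t G : 0 < Bs a t G -> is_derive (fun G => Wf a t G) G (a * t * Uf a t G).
Proof.
  intros HB. unfold Wf, Uf.
  evar (d : R). replace (a * t * (Af a G * Rpower (Bs a t G) (- / a))) with d.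
  apply (is_derive_comp (fun y => Rpower y ((a - 1) / a)) (fun G => Bs a t G)).
  apply Rpower_derive; auto.
  unfold Bs. apply @is_derive_plus. apply (@is_derive_const R_AbsRing R_NormedModule).
  apply @is_derive_scal. apply Sf_derive.
  unfold d. simpl. unfold scal; simpl; unfold mult; simpl. unfold plus, zero; simpl.
  replace ((a - 1) / a - 1) with (- / a) by (field; lra). field. lra.
Qed.

Lemma Wf_derive_t t G : 0 < Bs a t G -> is_derive (fun t => Wf a t G) t (Vt a t G).
Proof.
  intros HB. unfold Wf, Vt.
  assert (H1 : is_derive (fun t => Bs a t G) t (a * Sf a G)).
  { unfold Bs. auto_derive; auto. ring. }
  evar (d : R). replace ((a - 1) * Sf a G * Rpower (Bs a t G) (- / a)) with d.
  apply (is_derive_comp (fun y => Rpower y ((a - 1) / a)) (fun t => Bs a t G)).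
  apply Rpower_derive; auto. apply H1.
  unfold d. simpl. unfold scal; simpl; unfold mult; simpl.
  replace ((a - 1) / a - 1) with (- / a) by (field; lra). field. lra.
Qed.
End SP2.

Lemma cmult {U : UniformSpace} (f g : U -> R) x :
  continuous f x -> continuous g x -> continuous (fun y => f y * g y) x.
Proof. intros; exact (@continuous_mult U R_AbsRing f g x H H0). Qed.
Lemma cplus {U : UniformSpace} (f g : U -> R) x :
  continuous f x -> continuous g x -> continuous (fun y => f y + g y) x.
Proof. intros; exact (@continuous_plus U R_AbsRing R_NormedModule f g x H H0). Qed.
Lemma cconst {U : UniformSpace} (c : R) (x : U) : continuous (fun _ => c) x.
Proof. apply continuous_const. Qed.
Lemma cfst (x y : R) : continuous (fun p : R * R => fst p) (x, y).
Proof. apply continuous_fst. Qed.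
Lemma csnd (x y : R) : continuous (fun p : R * R => snd p) (x, y).
Proof. apply continuous_snd. Qed.

Lemma Rpower_cont y c : 0 < y -> continuous (fun x => Rpower x c) y.
Proof. intros. apply (@ex_derive_continuous R_AbsRing R_NormedModule). eexists; apply Rpower_derive; auto. Qed.

Section SP3.
Variable a : R.
Hypothesis Ha : 1 < a.

Lemma Sf_cont2 t G : continuous (fun p : R * R => Sf a (snd p)) (t, G).
Proof.
  apply (continuous_comp (fun p : R*R => snd p) (fun x => Sf a x)). apply csnd.
  apply rpow_cont. apply Rdiv_lt_0_compat; lra.
Qed.
Lemma Af_cont2 t G : continuous (fun p : R * R => Af a (snd p)) (t, G).
Proof.
  apply (continuous_comp (fun p : R*R => snd p) (fun x => Af a x)). apply csnd.
  apply rpow_cont. apply Rinv_0_lt_compat; lra.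
Qed.
Lemma Bs_cont2 t G : continuous (fun p : R * R => Bs a (fst p) (snd p)) (t, G).
Proof.
  unfold Bs. apply cplus. apply cconst. apply cmult. apply cmult. apply cconst. apply cfst.
  apply Sf_cont2.
Qed.
Lemma RpB_cont2 t G c : 0 < Bs a t G -> continuous (fun p : R * R => Rpower (Bs a (fst p) (snd p)) c) (t, G).
Proof.
  intros HB. apply (continuous_comp (fun p : R*R => Bs a (fst p) (snd p)) (fun y => Rpower y c)).
  apply Bs_cont2. apply Rpower_cont. auto.
Qed.
Lemma Wf_cont2 t G : 0 < Bs a t G -> continuous (fun p : R * R => Wf a (fst p) (snd p)) (t, G).
Proof. intros; unfold Wf; apply RpB_cont2; auto. Qed.
Lemma Uf_cont2 t G : 0 < Bs a t G -> continuous (fun p : R * R => Uf a (fst p) (snd p)) (t, G).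
Proof. intros; unfold Uf; apply cmult. apply Af_cont2. apply RpB_cont2; auto. Qed.
Lemma Vt_cont2 t G : 0 < Bs a t G -> continuous (fun p : R * R => Vt a (fst p) (snd p)) (t, G).
Proof. intros; unfold Vt; apply cmult. apply cmult. apply cconst. apply Sf_cont2. apply RpB_cont2; auto. Qed.
End SP3.

Lemma ballR (x e y : R) : ball x e y <-> Rabs (y - x) < e.
Proof. unfold ball; simpl; unfold AbsRing_ball, abs, minus, plus, opp; simpl. reflexivity. Qed.

Lemma lip_cont (f : R -> R) x K : (forall y, Rabs (f y - f x) <= K * Rabs (y - x)) -> continuous f x.
Proof.
  intros H. apply filterlim_locally. intros eps.
  exists (mkposreal (eps / (Rabs K + 1)) ltac:(apply Rdiv_lt_0_compat; [apply cond_pos| pose proof (Rabs_pos K); lra])).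
  intros y Hy. rewrite ballR in Hy |- *. simpl in Hy.
  eapply Rle_lt_trans. apply H.
  apply Rle_lt_trans with (Rabs K * Rabs (y - x)). apply Rmult_le_compat_r. apply Rabs_pos. apply Rle_abs.
  apply Rle_lt_trans with ((Rabs K + 1) * Rabs (y - x)). apply Rmult_le_compat_r. apply Rabs_pos. lra.
  assert (0 < Rabs K + 1) by (pose proof (Rabs_pos K); lra).
  apply Rmult_lt_reg_l with (/ (Rabs K + 1)). apply Rinv_0_lt_compat; auto.
  rewrite <- Rmult_assoc, Rinv_l by lra. unfold Rdiv in Hy. lra.
Qed.

Lemma Rmax_lip x y : Rabs (Rmax 0 y - Rmax 0 x) <= Rabs (y - x).
Proof. unfold Rmax; destruct (Rle_dec 0 y), (Rle_dec 0 x); unfold Rabs; repeat destruct Rcase_abs; lra. Qed.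


Lemma deriv_eps f x l : is_derive f x l -> forall e, 0 < e ->
  exists d, 0 < d /\ forall y, Rabs (y - x) < d -> Rabs (f y - f x - l * (y - x)) <= e * Rabs (y - x).
Proof.
  intros H e He. apply is_derive_Reals in H. destruct (H e He) as [d Hd].
  exists d. split. apply cond_pos. intros y Hy.
  destruct (Req_dec y x) as [E|E].
  - subst. replace (f x - f x - l * (x - x)) with 0 by ring. rewrite Rabs_R0, Rminus_diag, Rabs_R0. lra.
  - assert (Hh : y - x <> 0) by lra. specialize (Hd (y - x) Hh Hy).
    replace (x + (y - x)) with y in Hd by ring.
    replace (f y - f x - l * (y - x)) with ((y - x) * ((f y - f x) / (y - x) - l)) by (field; auto).
    rewrite Rabs_mult. rewrite Rmult_comm. apply Rmult_le_compat_r. apply Rabs_pos. lra.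
Qed.

Section SP5.
Variable a : R.
Hypothesis Ha : 1 < a.
Variable u0 : R -> R.
Hypothesis Hnonneg : forall x, 0 <= x -> 0 <= u0 x.
Variables B K Mb : R.
Hypothesis HB : forall x, 0 <= x -> u0 x <= B.
Hypothesis HK0 : 0 <= K.
Definition g x := rpow (u0 x) (a - 1).
Hypothesis HK : forall x y, 0 <= x -> 0 <= y -> Rabs (g x - g y) <= K * Rabs (x - y).
Definition ut x := u0 (Rmax 0 x).
Definition M0 x := RInt ut 0 x.

Lemma B_ge0 : 0 <= B.
Proof. apply Rle_trans with (u0 0). apply Hnonneg; lra. apply HB; lra. Qed.

Lemma u0_eq x : 0 <= x -> u0 x = Af a (g x).
Proof. intros; unfold g; rewrite Af_of; auto. Qed.

Lemma g_ge0 x : 0 <= g x. Proof. apply rpow_ge0. Qed.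
Definition Gb := rpow B (a - 1).
Lemma g_bound x : 0 <= x -> g x <= Gb.
Proof. intros; unfold g, Gb; apply rpow_le. lra. apply HB; auto. Qed.

Lemma ut_nonneg x : 0 <= ut x. Proof. apply Hnonneg, Rmax_l. Qed.
Lemma ut_bound x : ut x <= B. Proof. apply HB, Rmax_l. Qed.

Lemma gR_cont x : continuous (fun y => g (Rmax 0 y)) x.
Proof.
  apply lip_cont with K. intros y. eapply Rle_trans. apply HK; apply Rmax_l.
  apply Rmult_le_compat_l; auto. apply Rmax_lip.
Qed.

Lemma ut_cont x : continuous ut x.
Proof.
  apply continuous_ext with (fun y => Af a (g (Rmax 0 y))).
  intros y; unfold ut; rewrite u0_eq; auto; apply Rmax_l.
  apply (continuous_comp (fun y => g (Rmax 0 y)) (Af a)). apply gR_cont.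
  apply rpow_cont. apply Rinv_0_lt_compat; lra.
Qed.

Lemma ut_exRInt x y : ex_RInt ut x y.
Proof. apply (@ex_RInt_continuous R_CompleteNormedModule). intros; apply ut_cont. Qed.

Lemma M0_derive x : is_derive M0 x (ut x).
Proof.
  apply is_derive_RInt with 0. apply filter_forall. intros b. apply (@RInt_correct R_CompleteNormedModule), ut_exRInt.
  apply ut_cont.
Qed.

Lemma M0_diff x y : M0 y - M0 x = RInt ut x y.
Proof.
  unfold M0. rewrite <- (RInt_Chasles ut 0 x y) by apply ut_exRInt.
  change (plus (RInt ut 0 x) (RInt ut x y)) with (RInt ut 0 x + RInt ut x y). ring.
Qed.

Lemma M0_lip x y : Rabs (M0 x - M0 y) <= B * Rabs (x - y).
Proof.
  rewrite M0_diff. rewrite Rmult_comm.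
  apply (norm_RInt_le_const_abs ut y x). intros z _. unfold norm; simpl; unfold abs; simpl.
  rewrite Rabs_right. apply ut_bound. apply Rle_ge, ut_nonneg.
  apply (@RInt_correct R_CompleteNormedModule), ut_exRInt.
Qed.

Lemma M0_mono x y : x <= y -> M0 x <= M0 y.
Proof.
  intros H. assert (0 <= RInt ut x y). apply RInt_ge_0; auto. apply ut_exRInt. intros; apply ut_nonneg.
  rewrite <- M0_diff in H0. lra.
Qed.

Lemma M0_0 : M0 0 = 0. Proof. unfold M0; rewrite RInt_point; auto. Qed.

Lemma M0_nonneg x : 0 <= x -> 0 <= M0 x.
Proof. intros; rewrite <- M0_0; apply M0_mono; auto. Qed.

Lemma m0_eq x : 0 <= x -> RInt u0 0 x = M0 x.
Proof.
  intros Hx. unfold M0. apply RInt_ext. intros z Hz. rewrite Rmin_left, Rmax_right in Hz by auto.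
  unfold ut. rewrite Rmax_right; auto; lra.
Qed.

Lemma M0_bounded : ex_RInt_gen u0 (at_point 0) (Rbar_locally p_infty) ->
  exists Mb, 0 <= Mb /\ forall x, 0 <= x -> M0 x <= Mb.
Proof.
  intros [l Hl]. exists (Rmax l 0). split. apply Rmax_r.
  intros x Hx. apply Rle_trans with l; [|apply Rmax_l].
  destruct (Rle_dec (M0 x) l) as [H|H]; auto. exfalso.
  assert (Heps : 0 < M0 x - l) by lra.
  pose proof (Hl (fun y => ball l (mkposreal _ Heps) y) (locally_ball l (mkposreal _ Heps))) as H1.
  destruct H1 as [Q R HQ HR Hp]. destruct HR as [M HM].
  set (b := Rmax x M + 1).
  assert (Hb1 : x <= b) by (unfold b; pose proof (Rmax_l x M); lra).
  assert (Hb2 : M < b) by (unfold b; pose proof (Rmax_r x M); lra).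
  destruct (Hp 0 b HQ (HM b Hb2)) as [y [Hy1 Hy2]]. simpl in Hy1, Hy2.
  rewrite ballR in Hy2. simpl in Hy2.
  apply (@is_RInt_unique R_CompleteNormedModule) in Hy1. rewrite m0_eq in Hy1 by lra.
  pose proof (M0_mono x b Hb1). apply Rabs_def2 in Hy2. lra.
Qed.
Hypothesis HMb0 : 0 <= Mb.
Hypothesis HMb : forall x, 0 <= x -> M0 x <= Mb.

Definition q x := M0 x * g x.
Definition Lq := Mb * K + Gb * B.
Definition Qb := Mb * Gb.

Lemma Gb_ge0 : 0 <= Gb. Proof. apply rpow_ge0. Qed.
Lemma B0 : 0 <= B. Proof. apply B_ge0. Qed.
Lemma Lq_ge0 : 0 <= Lq.
Proof. unfold Lq. pose proof Gb_ge0. pose proof B0. apply Rplus_le_le_0_compat; apply Rmult_le_pos; auto. Qed.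

Lemma q_ge0 x : 0 <= x -> 0 <= q x.
Proof. intros. unfold q. apply Rmult_le_pos. apply M0_nonneg; auto. apply g_ge0. Qed.

Lemma q_le x : 0 <= x -> q x <= Qb.
Proof.
  intros. unfold q, Qb. apply Rmult_le_compat. apply M0_nonneg; auto. apply g_ge0. apply HMb; auto.
  apply g_bound; auto.
Qed.

Lemma q_lip x y : 0 <= x -> 0 <= y -> Rabs (q x - q y) <= Lq * Rabs (x - y).
Proof.
  intros Hx Hy. unfold q, Lq.
  replace (M0 x * g x - M0 y * g y) with
    (M0 x * (g x - g y) + g y * (M0 x - M0 y)) by ring.
  eapply Rle_trans. apply Rabs_triang. rewrite !Rabs_mult.
  rewrite Rmult_plus_distr_r.
  apply Rplus_le_compat.
  - rewrite Rmult_assoc. apply Rmult_le_compat. apply Rabs_pos. apply Rabs_pos.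
    rewrite Rabs_right. apply HMb; auto. apply Rle_ge, M0_nonneg; auto. apply HK; auto.
  - rewrite Rmult_assoc. apply Rmult_le_compat. apply Rabs_pos. apply Rabs_pos.
    rewrite Rabs_right. apply g_bound; auto. apply Rle_ge, g_ge0.
    apply M0_lip; auto.
Qed.

Definition PP t x := x + a * t * q x.
Definition TT := / (2 * (a * Lq + 1)).

Lemma TT_pos : 0 < TT.
Proof. unfold TT. pose proof Lq_ge0. apply Rinv_0_lt_compat. assert (0 <= a * Lq) by (apply Rmult_le_pos; lra). lra. Qed.

Lemma aTL t : 0 <= t <= TT -> a * t * Lq <= / 2.
Proof.
  intros [H0 H1]. pose proof Lq_ge0. unfold TT in H1.
  assert (0 <= a * Lq) by (apply Rmult_le_pos; lra).
  apply Rle_trans with (a * Lq * / (2 * (a * Lq + 1))).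
  replace (a * t * Lq) with (a * Lq * t) by ring. apply Rmult_le_compat_l; auto.
  apply Rmult_le_reg_l with (2 * (a * Lq + 1)). lra.
  field_simplify; lra.
Qed.

Lemma PP_ge t x : 0 <= t -> 0 <= x -> x <= PP t x.
Proof. intros. unfold PP. pose proof (q_ge0 x H0). assert (0 <= a * t * q x) by (apply Rmult_le_pos; [apply Rmult_le_pos|]; lra). lra. Qed.

Lemma PP_bilip t x y : 0 <= t <= TT -> 0 <= x -> 0 <= y ->
  / 2 * Rabs (x - y) <= Rabs (PP t x - PP t y) <= 3 / 2 * Rabs (x - y).
Proof.
  intros Ht Hx Hy. pose proof (aTL t Ht). pose proof (q_lip x y Hx Hy).
  assert (Hat : 0 <= a * t) by (apply Rmult_le_pos; lra).
  unfold PP. replace (x + a * t * q x - (y + a * t * q y)) with ((x - y) + a * t * (q x - q y)) by ring.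
  assert (Habs : Rabs (a * t * (q x - q y)) <= / 2 * Rabs (x - y)).
  { rewrite Rabs_mult, (Rabs_right (a*t)) by lra. apply Rle_trans with (a * t * (Lq * Rabs (x - y))).
    apply Rmult_le_compat_l; auto. rewrite <- Rmult_assoc. apply Rmult_le_compat_r; auto. apply Rabs_pos. }
  split.
  - pose proof (Rabs_triang_inv (x - y) (- (a * t * (q x - q y)))). rewrite Rabs_Ropp in H1.
    replace (x - y - - (a * t * (q x - q y))) with (x - y + a * t * (q x - q y)) in H1 by ring. lra.
  - pose proof (Rabs_triang (x - y) (a * t * (q x - q y))). lra.
Qed.

Lemma PP_0 t : PP t 0 = 0.
Proof. unfold PP, q. unfold M0. rewrite RInt_point. unfold zero; simpl. ring. Qed.

Lemma PP_surj t y : 0 <= t <= TT -> 0 <= y -> exists x, 0 <= x /\ PP t x = y.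
Proof.
  intros Ht Hy. set (f := fun z => PP t (Rmax 0 z)).
  assert (Hc : continuity f).
  { intros z. apply continuity_pt_filterlim. apply lip_cont with (3/2). intros w. unfold f.
    eapply Rle_trans. apply PP_bilip; auto; apply Rmax_l. apply Rmult_le_compat_l. lra. apply Rmax_lip. }
  destruct (IVT_gen f 0 y y Hc) as [x [Hx1 Hx2]].
  { unfold f. rewrite Rmax_left, PP_0 by lra. rewrite (Rmax_right 0 y) by lra.
    pose proof (PP_ge t y ltac:(lra) Hy). rewrite Rmin_left, Rmax_right; lra. }
  rewrite Rmin_left, Rmax_right in Hx1 by lra. exists x. split. lra.
  unfold f in Hx2. rewrite Rmax_right in Hx2; lra.
Qed.

Variable X : R -> R -> R.
Hypothesis HX : forall t rho, 0 <= t <= TT -> 0 <= rho -> 0 <= X t rho /\ PP t (X t rho) = rho.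

Lemma X_ge0 t rho : 0 <= t <= TT -> 0 <= rho -> 0 <= X t rho.
Proof. intros; apply HX; auto. Qed.
Lemma X_eq t rho : 0 <= t <= TT -> 0 <= rho -> PP t (X t rho) = rho.
Proof. intros; apply HX; auto. Qed.

Lemma X_le t rho : 0 <= t <= TT -> 0 <= rho -> X t rho <= rho.
Proof. intros. rewrite <- (X_eq t rho) at 2; auto. apply PP_ge. lra. apply X_ge0; auto. Qed.

Lemma X_zero t : 0 <= t <= TT -> X t 0 = 0.
Proof. intros. pose proof (X_le t 0 H ltac:(lra)). pose proof (X_ge0 t 0 H ltac:(lra)). lra. Qed.

Lemma X_pos t rho : 0 <= t <= TT -> 0 < rho -> 0 < X t rho.
Proof.
  intros. destruct (X_ge0 t rho H ltac:(lra)) as [H1|H1]; auto.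
  pose proof (X_eq t rho H ltac:(lra)). rewrite <- H1, PP_0 in H2. lra.
Qed.

Lemma X_t0 rho : 0 <= TT -> 0 <= rho -> X 0 rho = rho.
Proof. intros. pose proof (X_eq 0 rho ltac:(lra) H0). unfold PP in H1. lra. Qed.

Lemma X_lip t t' rho rho' : 0 <= t <= TT -> 0 <= t' <= TT -> 0 <= rho -> 0 <= rho' ->
  Rabs (X t rho - X t' rho') <= 2 * Rabs (rho - rho') + 2 * a * Qb * Rabs (t - t').
Proof.
  intros Ht Ht' Hr Hr'. set (x := X t rho). set (x' := X t' rho').
  assert (Hx : 0 <= x) by (apply X_ge0; auto). assert (Hx' : 0 <= x') by (apply X_ge0; auto).
  pose proof (PP_bilip t x x' Ht Hx Hx') as [H1 _].
  assert (E : PP t x - PP t x' = (rho - rho') - a * (t - t') * q x').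
  { unfold x. rewrite X_eq by auto. rewrite <- (X_eq t' rho') by auto. fold x'. unfold PP. ring. }
  rewrite E in H1.
  assert (Rabs (a * (t - t') * q x') <= a * Qb * Rabs (t - t')).
  { rewrite !Rabs_mult. rewrite (Rabs_right a) by lra. rewrite (Rabs_right (q x')) by (apply Rle_ge, q_ge0; auto).
    pose proof (q_le x' Hx'). pose proof (Rabs_pos (t - t')).
    replace (a * Qb * Rabs (t - t')) with (a * Rabs (t - t') * Qb) by ring.
    apply Rmult_le_compat_l; auto. apply Rmult_le_pos; lra. }
  pose proof (Rabs_triang (rho - rho') (- (a * (t - t') * q x'))). rewrite Rabs_Ropp in H0.
  replace (rho - rho' + - (a * (t - t') * q x')) with (rho - rho' - a * (t - t') * q x') in H0 by ring.
  lra.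
Qed.

Lemma ut_eq x : 0 <= x -> ut x = Af a (g x).
Proof. intros. unfold ut. rewrite Rmax_right by auto. apply u0_eq; auto. Qed.

Lemma core t x : 0 <= t <= TT -> 0 <= x -> forall eps, 0 < eps ->
  exists eta, 0 < eta /\ forall x', 0 <= x' -> Rabs (x' - x) < eta ->
  Rabs (M0 x' * Wf a t (g x') - M0 x * Wf a t (g x) - Uf a t (g x) * ((x' - x) + a * t * (q x' - q x)))
    <= eps * Rabs (x' - x).
Proof.
  intros Ht Hx eps He.
  set (G := g x). set (U := Uf a t G). set (A := Af a G).
  set (Z := Wf a t G - a * t * U * G).
  assert (HAZ : A * Z = U) by (unfold A, Z, U; apply ident_rho; auto; first [apply g_ge0 | lra]).
  assert (HA : 0 <= A <= B). { split. apply Af_ge0. unfold A, G. rewrite <- u0_eq by auto. apply HB; auto. }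
  set (cb := B + Mb).
  assert (Hcb : 0 <= cb) by (unfold cb; pose proof B0; lra).
  set (e2 := eps / (2 * (cb + 1) * (K + 1))).
  assert (He2 : 0 < e2) by (unfold e2; apply Rdiv_lt_0_compat; [lra| apply Rmult_lt_0_compat; lra]).
  set (zb := Rabs Z + e2 * K).
  assert (Hzb : 0 <= zb) by (unfold zb; pose proof (Rabs_pos Z); assert (0 <= e2 * K) by (apply Rmult_le_pos; lra); lra).
  set (e1 := eps / (2 * (zb + 1))).
  assert (He1 : 0 < e1) by (unfold e1; apply Rdiv_lt_0_compat; lra).
  destruct (deriv_eps _ _ _ (M0_derive x) e1 He1) as [d1 [Hd1 H1]].
  assert (HBs : 0 < Bs a t G) by (pose proof (Bs_ge1 a Ha t G ltac:(lra)); lra).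
  destruct (deriv_eps _ _ _ (Wf_derive_G a Ha t G HBs) e2 He2) as [d2 [Hd2 H2]].
  exists (Rmin 1 (Rmin d1 (d2 / (K + 1)))). split.
  { apply Rmin_pos. lra. apply Rmin_pos. auto. apply Rdiv_lt_0_compat; lra. }
  intros x' Hx' Hd.
  assert (Hd' : Rabs (x' - x) < 1) by (eapply Rlt_le_trans; [apply Hd| apply Rmin_l]).
  assert (Hd1' : Rabs (x' - x) < d1) by (eapply Rlt_le_trans; [apply Hd| eapply Rle_trans; [apply Rmin_r|apply Rmin_l]]).
  assert (Hd2' : Rabs (x' - x) < d2 / (K + 1)) by (eapply Rlt_le_trans; [apply Hd| eapply Rle_trans; [apply Rmin_r|apply Rmin_r]]).
  set (G' := g x'). set (dl := x' - x). fold dl in Hd', Hd1', Hd2'.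
  assert (HG : Rabs (G' - G) <= K * Rabs dl) by (apply HK; auto).
  assert (HG2 : Rabs (G' - G) < d2).
  { apply Rle_lt_trans with (K * Rabs dl); auto. apply Rle_lt_trans with ((K + 1) * Rabs dl).
    apply Rmult_le_compat_r. apply Rabs_pos. lra.
    apply Rmult_lt_reg_l with (/ (K + 1)). apply Rinv_0_lt_compat; lra.
    rewrite <- Rmult_assoc, Rinv_l by lra. unfold Rdiv in Hd2'. lra. }
  set (E := Wf a t G' - Wf a t G - a * t * U * (G' - G)).
  assert (HE : Rabs E <= e2 * K * Rabs dl).
  { eapply Rle_trans. unfold E. replace (a * t * U * (G' - G)) with (a * t * Uf a t G * (G' - G)) by auto.
    apply H2; auto. rewrite Rmult_assoc. apply Rmult_le_compat_l; lra. }
  set (Z' := Wf a t G' - a * t * U * G').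
  assert (HZ' : Rabs Z' <= zb).
  { replace Z' with (Z + E) by (unfold Z', Z, E; ring). unfold zb.
    eapply Rle_trans. apply Rabs_triang. apply Rplus_le_compat_l.
    apply Rle_trans with (e2 * K * Rabs dl); auto. rewrite <- (Rmult_1_r (e2 * K)) at 2.
    apply Rmult_le_compat_l. apply Rmult_le_pos; lra. lra. }
  set (dM := M0 x' - M0 x - ut x * dl).
  assert (HdM : Rabs dM <= e1 * Rabs dl) by (apply H1; auto).
  assert (HA' : ut x = A) by (unfold A, G; apply ut_eq; auto).
  assert (HC : Rabs (A * dl + M0 x) <= cb).
  { unfold cb. eapply Rle_trans. apply Rabs_triang. rewrite Rabs_mult.
    rewrite (Rabs_right A) by lra. rewrite (Rabs_right (M0 x)) by (apply Rle_ge, M0_nonneg; auto).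
    apply Rplus_le_compat. rewrite <- (Rmult_1_r B). apply Rmult_le_compat; try lra. apply Rabs_pos.
    apply HMb; auto. }
  replace (M0 x' * Wf a t G' - M0 x * Wf a t G - U * (dl + a * t * (q x' - q x)))
    with (dM * Z' + (A * dl + M0 x) * E + dl * (A * Z - U)).
  2:{ unfold dM, Z', E, Z, q, dl. fold G G' U. rewrite HA'. ring. }
  rewrite HAZ. replace (U - U) with 0 by ring. rewrite Rmult_0_r, Rplus_0_r.
  eapply Rle_trans. apply Rabs_triang. rewrite !Rabs_mult.
  apply Rle_trans with (e1 * Rabs dl * zb + cb * (e2 * K * Rabs dl)).
  apply Rplus_le_compat; apply Rmult_le_compat; auto; apply Rabs_pos.
  assert (E1 : e1 * zb <= eps / 2).
  { unfold e1. replace (eps / (2 * (zb + 1)) * zb) with (eps / 2 * (zb / (zb + 1))) by (field; lra).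
    rewrite <- (Rmult_1_r (eps/2)) at 2. apply Rmult_le_compat_l. lra.
    apply Rmult_le_reg_r with (zb + 1). lra. unfold Rdiv. rewrite Rmult_assoc, Rinv_l, Rmult_1_r by lra. lra. }
  assert (E2 : cb * (e2 * K) <= eps / 2).
  { unfold e2. replace (cb * (eps / (2 * (cb + 1) * (K + 1)) * K)) with (eps / 2 * (cb * K / ((cb + 1) * (K + 1)))) by (field; split; lra).
    rewrite <- (Rmult_1_r (eps/2)) at 2. apply Rmult_le_compat_l. lra.
    assert (0 < (cb + 1) * (K + 1)) by (apply Rmult_lt_0_compat; lra).
    apply Rmult_le_reg_r with ((cb+1)*(K+1)). auto. unfold Rdiv. rewrite Rmult_assoc, Rinv_l, Rmult_1_r by lra. nra. }
  pose proof (Rabs_pos dl). nra.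
Qed.

Definition gR z := g (Rmax 0 z).

Lemma gR_cont2 t z : continuous (fun p : R * R => gR (snd p)) (t, z).
Proof. apply (continuous_comp (fun p : R*R => snd p) gR). apply csnd. apply gR_cont. Qed.

Lemma M0_cont x : continuous M0 x.
Proof. apply (@ex_derive_continuous R_AbsRing R_NormedModule). eexists; apply M0_derive. Qed.

Lemma M0_cont2 t z : continuous (fun p : R * R => M0 (snd p)) (t, z).
Proof. apply (continuous_comp (fun p : R*R => snd p) M0). apply csnd. apply M0_cont. Qed.

Lemma comp2 (h : R -> R -> R) t z : continuous (fun p : R * R => h (fst p) (snd p)) (t, gR z) ->
  continuous (fun p : R * R => h (fst p) (gR (snd p))) (t, z).
Proof.
  intros H. apply (continuous_comp_2 (fun p : R*R => fst p) (fun p : R*R => gR (snd p)) h). apply cfst.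
  apply gR_cont2. exact H.
Qed.

Lemma PsiU_cont t z : 0 <= t -> continuous (fun p : R * R => Uf a (fst p) (gR (snd p))) (t, z).
Proof. intros. apply comp2. apply Uf_cont2; auto. pose proof (Bs_ge1 a Ha t (gR z) H). lra. Qed.
Lemma PsiW_cont t z : 0 <= t -> continuous (fun p : R * R => Wf a (fst p) (gR (snd p))) (t, z).
Proof. intros. apply comp2. apply Wf_cont2; auto. pose proof (Bs_ge1 a Ha t (gR z) H). lra. Qed.
Lemma PsiV_cont t z : 0 <= t -> continuous (fun p : R * R => Vt a (fst p) (gR (snd p))) (t, z).
Proof. intros. apply comp2. apply Vt_cont2; auto. pose proof (Bs_ge1 a Ha t (gR z) H). lra. Qed.

Lemma PsiH_cont t z : 0 <= t -> continuous (fun p : R * R => M0 (snd p) * Wf a (fst p) (gR (snd p))) (t, z).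
Proof. intros. apply cmult. apply M0_cont2. apply PsiW_cont; auto. Qed.

Lemma PsiMV_cont t z : 0 <= t -> continuous (fun p : R * R => M0 (snd p) * Vt a (fst p) (gR (snd p))) (t, z).
Proof. intros. apply cmult. apply M0_cont2. apply PsiV_cont; auto. Qed.

Lemma PsiMt_cont t z : 0 <= t -> continuous (fun p : R * R =>
   - (M0 (snd p) * Wf a (fst p) (gR (snd p))) * rpow (Uf a (fst p) (gR (snd p))) a) (t, z).
Proof.
  intros. apply cmult.
  apply (@continuous_opp _ R_AbsRing R_NormedModule (fun p : R*R => M0 (snd p) * Wf a (fst p) (gR (snd p)))).
  apply PsiH_cont; auto.
  apply (continuous_comp (fun p : R*R => Uf a (fst p) (gR (snd p))) (fun y => rpow y a)).
  apply PsiU_cont; auto. apply rpow_cont; lra.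
Qed.

Lemma ballRR (t x e : R) (p : R * R) : ball (t, x) e p <-> Rabs (fst p - t) < e /\ Rabs (snd p - x) < e.
Proof. destruct p as [s y]. simpl. unfold ball; simpl. unfold prod_ball; simpl.
  unfold AbsRing_ball, abs, minus, plus, opp; simpl. reflexivity. Qed.

Lemma cont2_eps (f : R * R -> R) t x : continuous f (t, x) -> forall eps, 0 < eps ->
  exists d, 0 < d /\ forall s y, Rabs (s - t) < d -> Rabs (y - x) < d -> Rabs (f (s, y) - f (t, x)) < eps.
Proof.
  intros H eps He. apply filterlim_locally with (eps := mkposreal eps He) in H.
  destruct H as [d Hd]. exists d. split. apply cond_pos. intros s y H1 H2.
  specialize (Hd (s, y)). rewrite ballRR in Hd. specialize (Hd (conj H1 H2)). rewrite ballR in Hd. auto.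
Qed.

Lemma gR_eq z : 0 <= z -> gR z = g z.
Proof. intros; unfold gR; rewrite Rmax_right; auto. Qed.

Lemma Qb_ge0 : 0 <= Qb.
Proof. unfold Qb. apply Rmult_le_pos; auto. apply Gb_ge0. Qed.

Lemma comp_X (Psi : R -> R -> R) t x : 0 <= t <= TT -> 0 <= x ->
  continuous (fun p : R * R => Psi (fst p) (snd p)) (t, X t x) -> forall eps, 0 < eps ->
  exists d, 0 < d /\ forall s y, 0 <= s <= TT -> 0 <= y -> Rabs (s - t) < d -> Rabs (y - x) < d ->
    Rabs (Psi s (X s y) - Psi t (X t x)) < eps.
Proof.
  intros Ht Hx Hc eps He. destruct (cont2_eps _ _ _ Hc eps He) as [d [Hd H]].
  pose proof Qb_ge0. set (C := 2 + 2 * a * Qb + 1).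
  assert (HC : 1 <= C) by (unfold C; assert (0 <= a * Qb) by (apply Rmult_le_pos; lra); lra).
  exists (d / C). split. apply Rdiv_lt_0_compat; lra.
  intros s y Hs Hy H1 H2.
  assert (Hdc : d / C <= d). { unfold Rdiv. rewrite <- (Rmult_1_r d) at 2. apply Rmult_le_compat_l. lra.
    rewrite <- Rinv_1. apply Rinv_le_contravar; lra. }
  apply (H s (X s y)). lra.
  eapply Rle_lt_trans. apply X_lip; auto.
  apply Rle_lt_trans with ((2 + 2 * a * Qb) * (d / C)).
  { assert (0 <= 2 * a * Qb) by (apply Rmult_le_pos; [lra|auto]).
    rewrite Rmult_plus_distr_r. apply Rplus_le_compat. apply Rmult_le_compat_l. lra. lra.
    apply Rmult_le_compat_l. auto. lra. }
  replace ((2 + 2 * a * Qb) * (d / C)) with (d * ((C - 1) / C)) by (unfold C in HC |- *; field; nra).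
  rewrite <- (Rmult_1_r d) at 2. apply Rmult_lt_compat_l. auto.
  apply Rmult_lt_reg_r with C. lra. unfold Rdiv. rewrite Rmult_assoc, Rinv_l by lra. lra.
Qed.

Lemma comp_X1 (Psi : R -> R -> R) t r : 0 <= t <= TT ->
  continuous (fun p : R * R => Psi (fst p) (snd p)) (t, X t (Rmax 0 r)) ->
  continuous (fun r => Psi t (X t (Rmax 0 r))) r.
Proof.
  intros Ht Hc. apply filterlim_locally. intros eps.
  destruct (comp_X Psi t (Rmax 0 r) Ht (Rmax_l 0 r) Hc eps (cond_pos eps)) as [d [Hd H]].
  exists (mkposreal d Hd). intros r' Hr'. rewrite ballR in Hr' |- *. simpl in Hr'.
  apply H; [auto | apply Rmax_l | rewrite Rminus_diag, Rabs_R0; auto | eapply Rle_lt_trans; [apply Rmax_lip|auto]].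
Qed.

Definition HH t r := M0 (X t r) * Wf a t (g (X t r)).
Definition uu t r := Uf a t (g (X t r)).

Lemma HH_rho_derive t rho : 0 <= t <= TT -> 0 < rho -> is_derive (fun r => HH t r) rho (uu t rho).
Proof.
  intros Ht Hr. apply is_derive_Reals. intros eps He.
  set (x := X t rho). assert (Hx : 0 <= x) by (apply X_ge0; auto; lra).
  destruct (core t x Ht Hx (eps / 4) ltac:(lra)) as [eta [Heta H]].
  exists (mkposreal (Rmin rho (eta / 2)) ltac:(apply Rmin_pos; lra)).
  intros h Hh0 Hh. simpl in Hh.
  assert (Hh1 : Rabs h < rho) by (eapply Rlt_le_trans; [apply Hh|apply Rmin_l]).
  assert (Hh2 : Rabs h < eta / 2) by (eapply Rlt_le_trans; [apply Hh|apply Rmin_r]).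
  assert (Hr' : 0 <= rho + h) by (apply Rabs_def2 in Hh1; lra).
  set (x' := X t (rho + h)). assert (Hx' : 0 <= x') by (apply X_ge0; auto).
  assert (Hdx : Rabs (x' - x) <= 2 * Rabs h).
  { unfold x', x. eapply Rle_trans. apply X_lip; auto; lra. rewrite Rminus_diag, Rabs_R0, Rmult_0_r, Rplus_0_r.
    replace (rho + h - rho) with h by ring. lra. }
  assert (Hid : h = (x' - x) + a * t * (q x' - q x)).
  { assert (E1 : PP t x' = rho + h) by (apply X_eq; auto). assert (E2 : PP t x = rho) by (apply X_eq; auto; lra).
    unfold PP in E1, E2. lra. }
  specialize (H x' Hx' ltac:(lra)).
  unfold HH, uu. fold x x'. replace (rho + h) with (rho + h) by auto. fold x'.
  replace ((M0 x' * Wf a t (g x') - M0 x * Wf a t (g x)) / h - Uf a t (g x))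
    with ((M0 x' * Wf a t (g x') - M0 x * Wf a t (g x) - Uf a t (g x) * ((x' - x) + a * t * (q x' - q x))) / h).
  2:{ rewrite <- Hid. field. auto. }
  unfold Rdiv. rewrite Rabs_mult, Rabs_inv.
  assert (Hah : 0 < Rabs h) by (apply Rabs_pos_lt; auto).
  apply Rmult_lt_reg_r with (Rabs h). auto. rewrite Rmult_assoc, Rinv_l, Rmult_1_r by lra.
  nra.
Qed.

Lemma uu_cont t r : 0 <= t <= TT -> continuous (fun r => uu t (Rmax 0 r)) r.
Proof.
  intros Ht. apply continuous_ext with (fun r => Uf a t (gR (X t (Rmax 0 r)))).
  intros; unfold uu; rewrite gR_eq; auto; apply X_ge0; auto; apply Rmax_l.
  apply (comp_X1 (fun s z => Uf a s (gR z))); auto. apply PsiU_cont. lra.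
Qed.

Lemma HH_cont t r : 0 <= t <= TT -> continuous (fun r => HH t (Rmax 0 r)) r.
Proof.
  intros Ht. apply continuous_ext with (fun r => M0 (X t (Rmax 0 r)) * Wf a t (gR (X t (Rmax 0 r)))).
  intros; unfold HH; rewrite gR_eq; auto; apply X_ge0; auto; apply Rmax_l.
  apply (comp_X1 (fun s z => M0 z * Wf a s (gR z))); auto. apply PsiH_cont. lra.
Qed.

Lemma HH_zero t : 0 <= t <= TT -> HH t 0 = 0.
Proof. intros. unfold HH. rewrite X_zero by auto. rewrite M0_0; ring. Qed.

Lemma m_eq_HH t rho : 0 <= t <= TT -> 0 <= rho -> RInt (fun r => uu t (Rmax 0 r)) 0 rho = HH t rho.
Proof.
  intros Ht Hr. set (v := fun r => uu t (Rmax 0 r)).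
  assert (Hv : forall r, continuous v r) by (intros; apply uu_cont; auto).
  assert (Hex : forall x y, ex_RInt v x y) by (intros; apply (@ex_RInt_continuous R_CompleteNormedModule); intros; apply Hv).
  assert (HI : forall r, is_derive (fun r => RInt v 0 r) r (v r)).
  { intros r. apply is_derive_RInt with 0. apply filter_forall. intros b. apply (@RInt_correct R_CompleteNormedModule), Hex. apply Hv. }
  set (f := fun r => RInt v 0 r - HH t (Rmax 0 r)).
  destruct (MVT_gen f 0 rho (fun _ => 0)) as [c [_ Hc]].
  - intros r Hr'. rewrite Rmin_left, Rmax_right in Hr' by lra.
    assert (Hd : is_derive f r (v r - uu t r)).
    { unfold f. apply (@is_derive_minus R_AbsRing R_NormedModule). apply HI.
      apply is_derive_ext_loc with (fun r => HH t r).
      exists (mkposreal r ltac:(lra)). intros z Hz. rewrite ballR in Hz. simpl in Hz. apply Rabs_def2 in Hz.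
      rewrite Rmax_right; auto; lra. apply HH_rho_derive; auto; lra. }
    unfold v in Hd. rewrite Rmax_right, Rminus_diag in Hd by lra. auto.
  - intros r _. apply continuity_pt_filterlim.
    apply (@continuous_minus R_UniformSpace R_AbsRing R_NormedModule).
    apply (@ex_derive_continuous R_AbsRing R_NormedModule). eexists; apply HI.
    apply HH_cont; auto.
  - unfold f in Hc. rewrite RInt_point, Rmult_0_l, (Rmax_left 0 0), HH_zero in Hc by lra.
    rewrite Rmax_right in Hc by auto. unfold zero in Hc; simpl in Hc. fold v. lra.
Qed.

Lemma Wf_mvt G t t' : 0 < t -> 0 < t' -> 0 <= G ->
  exists tau, Rabs (tau - t) <= Rabs (t' - t) /\ 0 < tau /\ Wf a t' G - Wf a t G = Vt a tau G * (t' - t).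
Proof.
  intros Ht Ht' HG.
  destruct (MVT_gen (fun s => Wf a s G) t t' (fun s => Vt a s G)) as [c [Hc1 Hc2]].
  - intros s Hs. apply (Wf_derive_t a Ha s G). assert (0 < s) by (pose proof (Rmin_glb_lt t t' 0); unfold Rmin in *; destruct (Rle_dec t t'); lra).
    pose proof (Bs_ge1 a Ha s G ltac:(lra)). lra.
  - intros s Hs. apply continuity_pt_filterlim. apply (@ex_derive_continuous R_AbsRing R_NormedModule (fun s => Wf a s G)).
    exists (Vt a s G). apply (Wf_derive_t a Ha s G).
    assert (0 < s) by (unfold Rmin in Hs; destruct (Rle_dec t t'); lra).
    pose proof (Bs_ge1 a Ha s G ltac:(lra)). lra.
  - exists c. split; [|split].
    + unfold Rmin, Rmax in Hc1; destruct (Rle_dec t t'); unfold Rabs; repeat destruct Rcase_abs; lra.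
    + unfold Rmin in Hc1; destruct (Rle_dec t t'); lra.
    + auto.
Qed.

Lemma HH_t_derive t rho : 0 < t <= TT -> 0 < rho -> forall eps, 0 < eps ->
  exists eta, 0 < eta /\ forall t', 0 < t' <= TT -> t' <> t -> Rabs (t' - t) < eta ->
  Rabs ((HH t' rho - HH t rho) / (t' - t) - (M0 (X t rho) * Vt a t (g (X t rho)) - a * uu t rho * q (X t rho))) < eps.
Proof.
  intros Ht Hr eps He.
  set (x := X t rho). assert (Hx : 0 <= x) by (apply X_ge0; lra).
  set (G := g x). set (U := Uf a t G).
  assert (HU : 0 <= U) by apply Uf_ge0.
  pose proof Qb_ge0. pose proof Lq_ge0.
  set (C1 := 2 * a * Qb). assert (HC1 : 0 <= C1) by (unfold C1; apply Rmult_le_pos; lra).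
  destruct (cont2_eps _ t x (PsiMV_cont t x ltac:(lra)) (eps / 4) ltac:(lra)) as [d1 [Hd1 HPhi]].
  destruct (core t x ltac:(lra) Hx (eps / (4 * (C1 + 1))) ltac:(apply Rdiv_lt_0_compat; lra)) as [e0 [He0 Hcore]].
  set (CQ := a * U * Lq * C1). assert (HCQ : 0 <= CQ) by (unfold CQ; apply Rmult_le_pos; [apply Rmult_le_pos; [apply Rmult_le_pos|]|]; lra).
  exists (Rmin (Rmin d1 (d1 / (C1 + 1))) (Rmin (e0 / (C1 + 1)) (eps / (4 * (CQ + 1))))).
  split. { repeat apply Rmin_pos; first [lra | apply Rdiv_lt_0_compat; lra]. }
  intros t' Ht' Hne Hd.
  assert (Hda : Rabs (t' - t) < d1 / (C1 + 1)) by (eapply Rlt_le_trans; [apply Hd|]; eapply Rle_trans; [apply Rmin_l|apply Rmin_r]).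
  assert (Hdb : Rabs (t' - t) < d1) by (eapply Rlt_le_trans; [apply Hd|]; eapply Rle_trans; [apply Rmin_l|apply Rmin_l]).
  assert (Hdc : Rabs (t' - t) < e0 / (C1 + 1)) by (eapply Rlt_le_trans; [apply Hd|]; eapply Rle_trans; [apply Rmin_r|apply Rmin_l]).
  assert (Hdd : Rabs (t' - t) < eps / (4 * (CQ + 1))) by (eapply Rlt_le_trans; [apply Hd|]; eapply Rle_trans; [apply Rmin_r|apply Rmin_r]).
  set (D := t' - t). fold D in Hda, Hdb, Hdc, Hdd.
  assert (HD : 0 < Rabs D) by (apply Rabs_pos_lt; unfold D; lra).
  set (x' := X t' rho). assert (Hx' : 0 <= x') by (apply X_ge0; lra).
  set (G' := g x').
  assert (Hdx : Rabs (x' - x) <= C1 * Rabs D).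
  { unfold x', x, C1, D. eapply Rle_trans. apply X_lip; lra. rewrite Rminus_diag, Rabs_R0. lra. }
  assert (HC1D : forall c, 0 < c -> Rabs D < c / (C1 + 1) -> C1 * Rabs D < c).
  { intros c Hc Hcc. apply Rle_lt_trans with ((C1 + 1) * Rabs D). nra.
    apply Rmult_lt_reg_l with (/ (C1 + 1)). apply Rinv_0_lt_compat; lra.
    rewrite <- Rmult_assoc, Rinv_l, Rmult_1_l by lra. unfold Rdiv in Hcc. lra. }
  assert (Hdx1 : Rabs (x' - x) < d1) by (eapply Rle_lt_trans; [apply Hdx|apply HC1D; auto]).
  assert (Hdx2 : Rabs (x' - x) < e0) by (eapply Rle_lt_trans; [apply Hdx|apply HC1D; auto]).
  specialize (Hcore x' Hx' Hdx2).
  destruct (Wf_mvt G' t t' ltac:(lra) ltac:(lra) (g_ge0 x')) as [tau [Htau1 [Htau2 Htau3]]].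
  fold D in Htau1, Htau3. assert (HPhi' := HPhi tau x' ltac:(lra) Hdx1). simpl in HPhi'.
  rewrite !gR_eq in HPhi' by auto. fold G G' in HPhi'.
  assert (Hid : x' - x + a * t * (q x' - q x) = - (a * D * q x')).
  { assert (E1 : PP t' x' = rho) by (apply X_eq; lra). assert (E2 : PP t x = rho) by (apply X_eq; lra).
    unfold PP in E1, E2. unfold D. lra. }
  assert (Hq : Rabs (q x' - q x) <= Lq * (C1 * Rabs D)).
  { eapply Rle_trans. apply q_lip; auto. apply Rmult_le_compat_l; auto. }
  unfold HH, uu. fold x x' G G' U.
  set (core_e := M0 x' * Wf a t G' - M0 x * Wf a t G - U * (x' - x + a * t * (q x' - q x))).
  fold G' G U core_e in Hcore.
  replace ((M0 x' * Wf a t' G' - M0 x * Wf a t G) / D - (M0 x * Vt a t G - a * U * q x))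
    with ((M0 x' * Vt a tau G' - M0 x * Vt a t G) + core_e / D - a * U * (q x' - q x)).
  2:{ unfold core_e. rewrite Hid. field_simplify; [|unfold D; lra|unfold D; lra].
      replace (M0 x' * Wf a t' G') with (M0 x' * (Wf a t' G' - Wf a t G') + M0 x' * Wf a t G') by ring.
      rewrite Htau3. fold D. field. unfold D; lra. }
  eapply Rle_lt_trans. apply Rabs_triang. eapply Rle_lt_trans. apply Rplus_le_compat_r. apply Rabs_triang.
  assert (T1 : Rabs (core_e / D) <= eps / 4).
  { unfold Rdiv. rewrite Rabs_mult, Rabs_inv. apply Rmult_le_reg_r with (Rabs D). auto.
    rewrite Rmult_assoc, Rinv_l, Rmult_1_r by lra. eapply Rle_trans. apply Hcore.
    apply Rle_trans with (eps / (4 * (C1 + 1)) * (C1 * Rabs D)).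
    apply Rmult_le_compat_l; [apply Rlt_le, Rdiv_lt_0_compat; lra| auto].
    replace (eps / (4 * (C1 + 1)) * (C1 * Rabs D)) with (eps / 4 * Rabs D * (C1 / (C1 + 1))) by (field; lra).
    assert (Hf : C1 / (C1 + 1) <= 1).
    { apply Rmult_le_reg_r with (C1 + 1). lra. unfold Rdiv. rewrite Rmult_assoc, Rinv_l, Rmult_1_r by lra. lra. }
    assert (0 <= C1 / (C1 + 1)) by (apply Rmult_le_pos; [lra|apply Rlt_le, Rinv_0_lt_compat; lra]).
    assert (0 <= eps / 4 * Rabs D) by nra. nra. }
  assert (T2 : Rabs (a * U * (q x' - q x)) < eps / 4).
  { rewrite Rabs_mult, (Rabs_right (a * U)) by (apply Rle_ge, Rmult_le_pos; lra).
    apply Rle_lt_trans with (a * U * (Lq * (C1 * Rabs D))). apply Rmult_le_compat_l; auto. apply Rmult_le_pos; lra.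
    replace (a * U * (Lq * (C1 * Rabs D))) with (CQ * Rabs D) by (unfold CQ; ring).
    apply Rle_lt_trans with ((CQ + 1) * Rabs D). nra.
    apply Rmult_lt_reg_l with (/ (CQ + 1)). apply Rinv_0_lt_compat; lra.
    rewrite <- Rmult_assoc, Rinv_l, Rmult_1_l by lra.
    replace (/ (CQ + 1) * (eps / 4)) with (eps / (4 * (CQ + 1))) by (field; lra). auto. }
  rewrite Rabs_Ropp. lra.
Qed.

Lemma cont2_of (F Psi : R -> R -> R) (Dm : R -> R -> Prop) :
  (forall t x, Dm t x -> 0 <= t <= TT /\ 0 <= x) ->
  (forall t x, Dm t x -> F t x = Psi t (X t x)) ->
  (forall t x, Dm t x -> continuous (fun p : R * R => Psi (fst p) (snd p)) (t, X t x)) ->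
  cont2_on Dm F.
Proof.
  intros HD HF HC t x Htx. apply filterlim_locally. intros eps.
  destruct (HD t x Htx) as [Ht Hx].
  destruct (comp_X Psi t x Ht Hx (HC t x Htx) eps (cond_pos eps)) as [d [Hd H]].
  exists (mkposreal d Hd). intros [s y] Hb Hsy. simpl in Hsy. rewrite ballRR in Hb. simpl in Hb.
  rewrite ballR. simpl. destruct (HD s y Hsy) as [Hs Hy].
  rewrite (HF s y Hsy), (HF t x Htx). apply H; tauto.
Qed.

Lemma part2 :
  let u := fun t rho => if Req_EM_T (u0 (X t rho)) 0 then 0
        else rpow (rpow (u0 (X t rho)) (- a) + a * t) (- / a) in
  let m := fun t rho => RInt (u t) 0 rho in
  cont2_on (fun t rho => 0 <= t <= TT /\ 0 <= rho) u /\
  classical_solution a TT m /\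
  (forall rho, 0 <= rho -> m 0 rho = RInt u0 0 rho) /\
  (forall t, 0 <= t <= TT -> m t 0 = 0).
Proof.
  intros u m. pose proof TT_pos as HT.
  assert (Hu : forall t rho, 0 <= t <= TT -> 0 <= rho -> u t rho = uu t rho).
  { intros t rho Ht Hr. unfold u, uu. set (x := X t rho). assert (Hx : 0 <= x) by (apply X_ge0; auto).
    destruct (Req_EM_T (u0 x) 0) as [E|E].
    - unfold g. rewrite E, rpow_zero. unfold Uf, Af. rewrite rpow_zero. ring.
    - unfold g. rewrite u_formula; auto. lra. pose proof (Hnonneg x Hx). lra. }
  assert (Hm : forall t rho, 0 <= t <= TT -> 0 <= rho -> m t rho = HH t rho).
  { intros t rho Ht Hr. unfold m. rewrite <- m_eq_HH by auto. apply RInt_ext.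
    intros z Hz. rewrite Rmin_left, Rmax_right in Hz by auto. rewrite Rmax_right by lra. apply Hu; auto; lra. }
  split; [|split; [|split]].
  - apply cont2_of with (fun s z => Uf a s (gR z)). auto.
    intros t x [Ht Hx]. rewrite Hu by auto. unfold uu. rewrite gR_eq; auto. apply X_ge0; auto.
    intros t x [Ht Hx]. apply PsiU_cont. lra.
  - unfold classical_solution.
    exists (fun t rho => - (m t rho) * rpow (u t rho) a), u.
    split; [|split; [|split]].
    + apply cont2_of with (fun s z => M0 z * Wf a s (gR z)). intros t x [Ht Hx]; split; lra.
      intros t x [Ht Hx]. rewrite Hm by lra. unfold HH. rewrite gR_eq; auto. apply X_ge0; lra.
      intros t x [Ht Hx]. apply PsiH_cont. lra.
    + apply cont2_of with (fun s z => - (M0 z * Wf a s (gR z)) * rpow (Uf a s (gR z)) a). intros t x [Ht Hx]; split; lra.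
      intros t x [Ht Hx]. simpl. rewrite Hm, Hu by lra. unfold HH, uu. rewrite gR_eq; auto. apply X_ge0; lra.
      intros t x [Ht Hx]. apply PsiMt_cont. lra.
    + apply cont2_of with (fun s z => Uf a s (gR z)). intros t x [Ht Hx]; split; lra.
      intros t x [Ht Hx]. rewrite Hu by lra. unfold uu. rewrite gR_eq; auto. apply X_ge0; lra.
      intros t x [Ht Hx]. apply PsiU_cont. lra.
    + intros t rho [Ht Hr]. split; [|split].
      * unfold is_derive_within. apply filterlim_locally. intros eps.
        destruct (HH_t_derive t rho Ht Hr eps (cond_pos eps)) as [eta [Heta H]].
        exists (mkposreal eta Heta). intros s Hs [HsI Hne]. rewrite ballR in Hs |- *. simpl in Hs.
        rewrite !Hm by lra.
        replace (- HH t rho * rpow (u t rho) a) with (M0 (X t rho) * Vt a t (g (X t rho)) - a * uu t rho * q (X t rho)).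
        apply H; auto.
        rewrite Hu by lra. unfold HH, uu, q.
        assert (Hx : 0 <= X t rho) by (apply X_ge0; lra).
        replace (M0 (X t rho) * Vt a t (g (X t rho)) - a * Uf a t (g (X t rho)) * (M0 (X t rho) * g (X t rho)))
          with (M0 (X t rho) * (Vt a t (g (X t rho)) - a * Uf a t (g (X t rho)) * g (X t rho))) by ring.
        rewrite ident_t; auto. ring. lra. apply g_ge0.
      * apply is_derive_ext_loc with (fun r => HH t r).
        exists (mkposreal rho Hr). intros z Hz. rewrite ballR in Hz. simpl in Hz. apply Rabs_def2 in Hz.
        rewrite Hm; auto; lra.
        rewrite Hu by lra. apply HH_rho_derive; auto; lra.
      * ring.
  - intros rho Hr. rewrite Hm by lra. unfold HH. rewrite X_t0 by lra. rewrite Wf_0, Rmult_1_r.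
    rewrite m0_eq; auto.
  - intros t Ht. unfold m. rewrite RInt_point. reflexivity.
Qed.
End SP5.

Theorem mainTheorem2 (alpha : R) (u0 : R -> R)
  (Halpha : 1 < alpha)
  (Hnonneg : forall x, 0 <= x -> 0 <= u0 x)
  (Hbdd : exists B, forall x, 0 <= x -> u0 x <= B)
  (Hint : ex_RInt_gen u0 (at_point 0) (Rbar_locally p_infty))
  (Hlip : exists K, forall x y, 0 <= x -> 0 <= y ->
      Rabs (rpow (u0 x) (alpha - 1) - rpow (u0 y) (alpha - 1)) <= K * Rabs (x - y)) :
  let m0 := fun rho => RInt u0 0 rho in
  let P := fun t rho0 => rho0 + alpha * m0 rho0 * rpow (u0 rho0) (alpha - 1) * t in
  exists T, 0 < T /\
    (forall t, 0 <= t <= T ->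
       (forall x, 0 <= x -> 0 <= P t x) /\
       (forall y, 0 <= y -> exists x, 0 <= x /\ P t x = y) /\
       (exists c C, 0 < c /\ 0 < C /\ forall x y, 0 <= x -> 0 <= y ->
          c * Rabs (x - y) <= Rabs (P t x - P t y) <= C * Rabs (x - y))) /\
    forall Pinv : R -> R -> R,
      (forall t rho, 0 <= t <= T -> 0 <= rho -> 0 <= Pinv t rho /\ P t (Pinv t rho) = rho) ->
      let u := fun t rho =>
        if Req_EM_T (u0 (Pinv t rho)) 0 then 0
        else rpow (rpow (u0 (Pinv t rho)) (- alpha) + alpha * t) (- / alpha) in
      let m := fun t rho => RInt (u t) 0 rho in
      cont2_on (fun t rho => 0 <= t <= T /\ 0 <= rho) u /\
      classical_solution alpha T m /\
      (forall rho, 0 <= rho -> m 0 rho = m0 rho) /\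
      (forall t, 0 <= t <= T -> m t 0 = 0).
Proof.
  intros m0 P.
  destruct Hbdd as [B HB]. destruct Hlip as [K0 HK'].
  set (K := Rmax K0 0).
  assert (HK0 : 0 <= K) by apply Rmax_r.
  assert (HK : forall x y, 0 <= x -> 0 <= y -> Rabs (g alpha u0 x - g alpha u0 y) <= K * Rabs (x - y)).
  { intros x y Hx Hy. eapply Rle_trans. apply HK'; auto. apply Rmult_le_compat_r. apply Rabs_pos. apply Rmax_l. }
  destruct (M0_bounded alpha Halpha u0 Hnonneg K HK0 HK Hint) as [Mb [HMb0 HMb]].
  assert (HP : forall t x, 0 <= x -> P t x = PP alpha u0 t x).
  { intros t x Hx. unfold P, PP, q, m0. rewrite m0_eq by auto. unfold g. ring. }
  exists (TT alpha B K Mb). split. apply (TT_pos alpha Halpha u0 Hnonneg B K Mb HB HK0 HMb0).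
  split.
  - intros t Ht. split; [|split].
    + intros x Hx. rewrite HP by auto. pose proof (PP_ge alpha Halpha u0 Hnonneg K HK0 HK t x ltac:(lra) Hx). lra.
    + intros y Hy. destruct (PP_surj alpha Halpha u0 Hnonneg B K Mb HB HK0 HK HMb0 HMb t y Ht Hy) as [x [Hx Hx2]].
      exists x. split; auto. rewrite HP; auto.
    + exists (/ 2), (3 / 2). split. lra. split. lra. intros x y Hx Hy. rewrite !HP by auto.
      apply (PP_bilip alpha Halpha u0 Hnonneg B K Mb HB HK0 HK HMb0 HMb); auto.
  - intros Pinv HPinv.
    apply (part2 alpha Halpha u0 Hnonneg B K Mb HB HK0 HK HMb0 HMb Pinv).
    intros t rho Ht Hr. destruct (HPinv t rho Ht Hr) as [H1 H2]. split; auto. rewrite <- HP; auto.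
Qed.
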